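(* Let $n\geq 1$. Among all topological trees with exactly $n$ leaves, the star $K_{1,n}$ is the one with the smallest Matula number. Moreover, $M(K_{1,n})=2^n$ for all $n>1$.
   Context: Let $p_m$ denote the $m$-th prime number ($p_1=2,p_2=3,p_3=5,\ldots$). All trees are rooted. The branches of a rooted tree $T$ are the components (rooted at the children of the root) that remain after deleting the root of $T$ and its incident edges. The Matula number $M(T)$ of a rooted tree is defined recursively: $M(K_1)=1$ for the one-vertex tree, and if $T$ has branches $T_1,\ldots,T_r$ then $M(T)=p_{M(T_1)}\cdot p_{M(T_2)}\cdots p_{M(T_r)}$. A leaf is a vertex of outdegree $0$ (so the one-vertex tree has one leaf). A topological tree is a rooted tree with no vertex of outdegree $1$. The star $K_{1,n}$ is the rooted tree consisting of a root with $n$ leaves attached directly to it. *)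

(* Defs.v *)
From mathcomp Require Import all_boot.
Set Implicit Arguments. Unset Strict Implicit. Unset Printing Implicit Defensive.

(* Rooted (unordered) trees: a node with its finite list of branches.
   The order of the list is irrelevant for all notions below. *)
Inductive tree := Node of seq tree.

Definition K1 : tree := Node [::].

Lemma exists_prime_above (n : nat) : exists p, (n < p) && prime p.
Proof. by case: (prime_above n) => p H1 H2; exists p; rewrite H1 H2. Qed.

Definition nextprime (n : nat) : nat := ex_minn (exists_prime_above n).

(* p_m, the m-th prime, with p_1 = 2, p_2 = 3, ... (p_0 is irrelevant, set to 2) *)
Definition nth_prime (m : nat) : nat := iter m.-1 nextprime 2.

Fixpoint matula (t : tree) : nat :=
  let: Node ts := t in
  foldr (fun u acc => nth_prime (matula u) * acc) 1 ts.

Fixpoint leaves (t : tree) : nat :=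
  let: Node ts := t in
  if ts is [::] then 1 else foldr (fun u acc => leaves u + acc) 0 ts.

Fixpoint topological (t : tree) : bool :=
  let: Node ts := t in
  (size ts != 1) && foldr (fun u acc => topological u && acc) true ts.

Definition star (n : nat) : tree := Node (nseq n K1).

(* Main.v *)
Require Import Defs.
From mathcomp Require Import all_boot.

Definition allP (P : tree -> Prop) (ts : seq tree) : Prop :=
  foldr (fun u acc => P u /\ acc) True ts.

Fixpoint tree_ind2 (P : tree -> Prop)
  (H : forall ts, allP P ts -> P (Node ts)) (t : tree) : P t :=
  match t with
  | Node ts => H ts ((fix aux (us : seq tree) : allP P us :=
      match us return allP P us with
      | [::] => I
      | u :: us' => conj (tree_ind2 P H u) (aux us')
      end) ts)
  end.

Lemma nextprime_gt n : n < nextprime n.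
Proof. rewrite /nextprime; case: ex_minnP => m /andP [] //. Qed.

Lemma nth_prime_gt m : m < nth_prime m.
Proof.
case: m => [|m] //=. rewrite /nth_prime /=.
elim: m => [|m IH] //=.
exact: leq_ltn_trans IH (nextprime_gt _).
Qed.

Lemma nth_prime1 : nth_prime 1 = 2. Proof. by []. Qed.

Definition Q (t : tree) := 0 < matula t /\ 2 ^ leaves t <= nth_prime (matula t).

Lemma listQ ts : allP Q ts ->
  0 < foldr (fun u acc => nth_prime (matula u) * acc) 1 ts /\
  2 ^ (foldr (fun u acc => leaves u + acc) 0 ts)
    <= foldr (fun u acc => nth_prime (matula u) * acc) 1 ts.
Proof.
elim: ts => [|u us IH] //= [[Hu1 Hu2] /IH [H1 H2]]; split.
  by rewrite muln_gt0 H1 andbT; apply: leq_trans (nth_prime_gt _).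
by rewrite expnD leq_mul.
Qed.

Lemma treeQ t : Q t.
Proof.
elim/tree_ind2: t => ts /(listQ ts) [H1 H2].
rewrite /Q /=; case: ts H1 H2 => [|u us] H1 H2 //.
split => //; apply: leq_trans H2 _; exact: ltnW (nth_prime_gt _).
Qed.

Lemma lower t : leaves t != 1 -> 2 ^ leaves t <= matula t.
Proof.
case: t => ts.
have H : allP Q ts by elim: ts => [|u us IH] //=; split => //; exact: treeQ.
have [H1 H2] := listQ ts H.
by case: ts H H1 H2 => [|u us] //= _ H1 H2 _.
Qed.

Lemma star_matula n : matula (star n) = 2 ^ n.
Proof. by elim: n => [|n IH] //=; rewrite /star /= in IH *; rewrite IH expnS. Qed.

Lemma star_leaves n : 0 < n -> leaves (star n) = n.
Proof.
case: n => // n _; rewrite /star /=.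
by elim: n => [|n IH] //=; rewrite IH.
Qed.

Lemma star_top n : 1 < n -> topological (star n).
Proof.
case: n => [|[|n]] // _; rewrite /star /=.
by elim: n => [|n IH] //=.
Qed.

Theorem mainTheorem1 :
  (forall n : nat, 1 < n ->
     [/\ topological (star n), leaves (star n) = n &
         forall T : tree, topological T -> leaves T = n ->
           matula (star n) <= matula T])
  /\ (topological K1 /\ leaves K1 = 1 /\
      forall T : tree, topological T -> leaves T = 1 -> matula K1 <= matula T)
  /\ (forall n : nat, 1 < n -> matula (star n) = 2 ^ n).
Proof.
split; last split.
- move=> n Hn; split; [exact: star_top | apply: star_leaves; exact: ltnW |].
  move=> T _ HT; rewrite star_matula -HT; apply: lower.
  by rewrite HT; case: n Hn {HT} => [|[|n]].
- split => //; split => // T _ _; rewrite /K1 /=; by case: (treeQ T).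
- move=> n _; exact: star_matula.
Qed.
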